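(* Let $N\ge1$, $1\le m\le N$, $\alpha>0$, and $V$ a real symmetric positive definite $N\times N$ matrix. Let $A=\begin{pmatrix}0&E\\-V&-\alpha D\end{pmatrix}$ and $C_G=\frac1{2\alpha}\begin{pmatrix}V^{-1}&0\\0&E\end{pmatrix}$. For $z\in\mathbb{C}$ define $$\rho(z)=(V+z^2)^{-1},\quad \kappa(z)=\hat e^T\rho(z)\hat e,\quad \tau(z)=E^{(m)}+\alpha z\kappa(z),\quad T(z)=\alpha\hat e\,\tau(z)^{-1}\hat e^T,\quad \theta(z)=\rho(z)T(z)\rho(z).$$ Then, for every $z$ at which $A-z$, $V+z^2$ and $\tau(z)$ are invertible, $$(A-z)^{-1}C_G=\frac1{2\alpha}\begin{pmatrix}Q_{11}&Q_{12}\\Q_{21}&Q_{22}\end{pmatrix}$$ with $N\times N$ blocks $$Q_{11}=-z\rho(z)V^{-1}-\theta(z),\quad Q_{12}=-\rho(z)+z\theta(z),\quad Q_{21}=zQ_{11}+V^{-1},\quad Q_{22}=zQ_{12}.$$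
   Context: $E$ is the $N\times N$ identity, $E^{(m)}$ the $m\times m$ identity, $D$ the diagonal $N\times N$ matrix with $D_{k,k}=1$ for $k\in\{N-m+1,\dots,N\}$ and $0$ otherwise, and $\hat e$ the $N\times m$ matrix whose only nonzero entries are $\hat e_{N-m+i,i}=1$, $i=1,\dots,m$ (so $\kappa(z)$ is the restriction of $\rho(z)$ to indices $N-m+1,\dots,N$). *)

(* Defs.v *)
From HB Require Import structures.
From mathcomp Require Import all_boot all_order all_algebra.
From mathcomp Require Import complex.
Set Implicit Arguments. Unset Strict Implicit. Unset Printing Implicit Defensive.
Import Order.TTheory GRing.Theory Num.Theory.
Local Open Scope ring_scope.

(* Real numbers: an arbitrary real closed field R; complex numbers: R[i]. *)

Definition cmx (R : rcfType) (m n : nat) (M : 'M[R]_(m, n)) : 'M[R[i]]_(m, n) :=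
  map_mx (fun x : R => (x%:C)%C) M.

Definition sym_posdef (R : rcfType) (N : nat) (V : 'M[R]_N) : Prop :=
  V^T = V /\ forall x : 'cV[R]_N, x != 0 -> 0 < (x^T *m V *m x) 0 0.

(* D: diagonal, D_{k,k} = 1 for k in {N-m+1..N} (1-based), i.e. k >= N-m (0-based) *)
Definition Dmx (C : pzRingType) (N m : nat) : 'M[C]_N :=
  \matrix_(k < N, l < N) ((k == l) && (N - m <= k)%N)%:R.

(* ehat: N x m, ehat_{N-m+i, i} = 1 (1-based), zero elsewhere *)
Definition ehat (C : pzRingType) (N m : nat) : 'M[C]_(N, m) :=
  \matrix_(k < N, i < m) (nat_of_ord k == (N - m + i)%N)%:R.

Section Defs.
Variables (R : rcfType) (N m : nat) (alpha : R) (V : 'M[R]_N).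
Local Notation C := R[i].
Local Notation a := ((alpha%:C)%C : C).

Definition Amx : 'M[C]_(N + N) :=
  block_mx 0 1%:M (- cmx V) (- (a *: Dmx C N m)).

Definition CGmx : 'M[C]_(N + N) :=
  (2 * a)^-1 *: block_mx (invmx (cmx V)) 0 0 1%:M.

Definition rho (z : C) : 'M[C]_N := invmx (cmx V + (z ^+ 2)%:M).
Definition kappa (z : C) : 'M[C]_m := (ehat C N m)^T *m rho z *m ehat C N m.
Definition tau (z : C) : 'M[C]_m := 1%:M + (a * z) *: kappa z.
Definition Tmx (z : C) : 'M[C]_N :=
  a *: (ehat C N m *m invmx (tau z) *m (ehat C N m)^T).
Definition theta (z : C) : 'M[C]_N := rho z *m Tmx z *m rho z.
End Defs.

(* Main.v *)
Require Import Defs.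
From HB Require Import structures.
From mathcomp Require Import all_boot all_order all_algebra.
From mathcomp Require Import complex zify.
Import Order.TTheory GRing.Theory Num.Theory.
Local Open Scope ring_scope.



Lemma cmx_unit (R : rcfType) (N : nat) (V : 'M[R]_N) : sym_posdef V -> cmx V \in unitmx.
Proof.
move=> [_ Vpd].
have -> : cmx V = map_mx (real_complex R) V by [].
rewrite map_unitmx unitmxE unitfE; apply/negP => /det0P [v v0 vV0].
have := Vpd v^T; rewrite trmx_eq0 v0 trmxK vV0 mul0mx mxE ltxx.
by move/(_ isT).
Qed.



Lemma lin1 (M : zmodType) (x y w u : M) : -(-x - y - w) + (-w - x + u) = y + u.
Proof. by rewrite !opprD !opprK !addrA addrK [x + y - x]addrAC subrr add0r. Qed.
Lemma lin2 (M : zmodType) (x y w u : M) : y + u = 0 -> -(-x + y - w) + (-u - w) = x.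
Proof.
move=> h; rewrite !opprD !opprK !addrA [x - y + w - u]addrAC addrK -addrA -opprD h oppr0 addr0.
done.
Qed.




Lemma eTe (C : pzRingType) (N m : nat) : (m <= N)%N ->
  (ehat C N m)^T *m ehat C N m = 1%:M.
Proof.
move=> mN; apply/matrixP => i j; rewrite !mxE.
have lt : (N - m + i < N)%N by rewrite -ltn_subRL subKn // ltn_ord.
rewrite (bigD1 (Ordinal lt)) //= big1 ?addr0.
  rewrite !mxE eqxx mul1r eqn_add2l //=.
move=> k /eqP nk; rewrite !mxE.
case: eqP => [hk|]; last by rewrite mul0r.
by case: nk; apply/val_inj.
Qed.

Lemma eeT (C : pzRingType) (N m : nat) : (m <= N)%N ->
  ehat C N m *m (ehat C N m)^T = Dmx C N m.
Proof.
move=> mN; apply/matrixP => k l; rewrite !mxE.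
case: (leqP (N - m) k) => hk.
  have lt : (k - (N - m) < m)%N.
    by have := ltn_ord k; lia.
  rewrite (bigD1 (Ordinal lt)) //= big1 ?addr0.
    rewrite !mxE /= subnKC // eqxx mul1r andbT; by rewrite eq_sym.
  move=> i /eqP ni; rewrite !mxE.
  case: eqP => [hi|]; last by rewrite mul0r.
  by case: ni; apply/val_inj => /=; rewrite hi addKn.
rewrite andbF big1 // => i _; rewrite !mxE.
case: eqP => [hi|]; last by rewrite mul0r.
by move: hk; rewrite hi; lia.
Qed.

Theorem lemma5 (R : rcfType) (N m : nat) (alpha : R) (V : 'M[R]_N) (z : R[i]) :
  (1 <= N)%N -> (1 <= m <= N)%N -> 0 < alpha -> sym_posdef V ->
  Amx m alpha V - z%:M \in unitmx ->
  cmx V + (z ^+ 2)%:M \in unitmx ->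
  tau m alpha V z \in unitmx ->
  let Vi := invmx (cmx V) in
  let Q11 := - (z *: (rho V z *m Vi)) - theta m alpha V z in
  let Q12 := - rho V z + z *: theta m alpha V z in
  let Q21 := z *: Q11 + Vi in
  let Q22 := z *: Q12 in
  invmx (Amx m alpha V - z%:M) *m CGmx alpha V
    = (2 * (alpha%:C)%C)^-1 *: block_mx Q11 Q12 Q21 Q22.
Proof.
move=> _ /andP[_ mN] _ Vpd uM uW ut Vi Q11 Q12 Q21 Q22.
set Vc := cmx V. set P := rho V z. set T := Tmx m alpha V z.
set a := (alpha%:C)%C. set D := Dmx R[i] N m. set e := ehat R[i] N m.
set Th := theta m alpha V z.
have hTh : Th = P *m T *m P by [].
have hWP : (Vc + (z^+2)%:M) *m P = 1%:M by apply: mulmxV.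
have hPW : P *m (Vc + (z^+2)%:M) = 1%:M by apply: mulVmx.
have uV : Vc \in unitmx by apply: cmx_unit.
have hVVi : Vc *m Vi = 1%:M by apply: mulmxV.
have hVi : Vi = P + z^+2 *: (P *m Vi).
  by rewrite -{1}[Vi]mul1mx -hPW mulmxDr mul_mx_scalar mulmxDl -mulmxA hVVi mulmx1 -scalemxAl.
have Fq : Q21 = - Q12.
  rewrite /Q21 /Q11 /Q12 -/P -/Th {2}hVi scalerBr scalerN scalerA -expr2.
  by rewrite opprD opprK addrC -addrA (addrA (_ *: _)) subrr add0r.
set ti := invmx (tau m alpha V z).
have hT : T = a *: (e *m ti *m e^T) by [].
have htau : tau m alpha V z = 1%:M + (a * z) *: (e^T *m P *m e) by [].
have H : e *m e^T = e *m ti *m e^T + (a*z) *: (e *m (e^T *m P *m e) *m ti *m e^T).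
  rewrite -{1}[e]mulmx1 -(mulmxV ut) htau -/ti.
  by rewrite mulmxDl mul1mx -scalemxAl mulmxDr -scalemxAr mulmxDl -scalemxAl !mulmxA.
have K : T + (a*z) *: (D *m P *m T) = a *: D.
  have K0 : D = e *m e^T by rewrite eeT.
  transitivity (a *: (e *m e^T)); last by rewrite K0.
  rewrite H scalerDr -hT; congr (_ + _).
  rewrite K0 hT -scalemxAr !scalerA mulrC; congr (_ *: _).
  by rewrite !mulmxA.
clearbody T.
have G3 : T *m P + a *: D *m Q12 = 0.
  have K' : T = a *: D - (a*z) *: (D *m P *m T) by rewrite -K addrK.
  rewrite [in LHS]K' /Q12 -/P -/Th hTh mulmxBl mulmxDr mulmxN -!scalemxAr -!scalemxAl scalerA !mulmxA.
  by rewrite [z * a]mulrC addrACA subrr addNr addr0.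
set c := (2 * (alpha%:C)%C)^-1.
suff key : (Amx m alpha V - z%:M) *m (c *: block_mx Q11 Q12 Q21 Q22) = CGmx alpha V.
  by rewrite -key mulKmx.
rewrite /Amx /CGmx [z%:M](scalar_mx_block N N) opp_block_mx add_block_mx.
rewrite -scalemxAr mulmx_block; congr (_ *: block_mx _ _ _ _).
- rewrite sub0r subr0 mulNmx mul_scalar_mx mul1mx /Q21.
  by rewrite addrA addNr add0r.
- rewrite sub0r subr0 mulNmx mul_scalar_mx mul1mx /Q22.
  by rewrite addNr.
- rewrite -/Vc -/a -/D subr0 Fq mulmxN.
  have F11 : (Vc + (z^+2)%:M) *m Q11 = -(z *: Vi) - T *m P.
    by rewrite /Q11 -/P -/Th hTh mulmxBr mulmxN -scalemxAr !mulmxA hWP !mul1mx.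
  have VQ : Vc *m Q11 = (Vc + (z^+2)%:M) *m Q11 - z^+2 *: Q11.
    by rewrite mulmxDl mul_scalar_mx addrK.
  have zQ12 : z *: Q12 = -(z^+2 *: Q11) - z *: Vi.
    by rewrite -(opprK Q12) -Fq /Q21 scalerN scalerDr scalerA -expr2 opprD.
  rewrite mulNmx mulmxBl mulNmx opprB opprK mul_scalar_mx zQ12 VQ F11 lin1.
  exact: G3.
- rewrite -/Vc -/a -/D subr0.
  have F12 : (Vc + (z^+2)%:M) *m Q12 = -1%:M + z *: (T *m P).
    by rewrite /Q12 -/P -/Th hTh mulmxDr mulmxN hWP -scalemxAr !mulmxA hWP mul1mx.
  have VQ2 : Vc *m Q12 = (Vc + (z^+2)%:M) *m Q12 - z^+2 *: Q12.
    by rewrite mulmxDl mul_scalar_mx addrK.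
  rewrite /Q22 mulNmx mulmxBl mulNmx -!scalemxAr mul_scalar_mx VQ2 F12.
  by rewrite scalerA -expr2 lin2 // -scalerDr G3 scaler0.
Qed.
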